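(* Let $G$ be a finite nonabelian nested group with chain of centers $G=X_0>X_1>\dots>X_n\ge1$ (so $n\ge1$). If $G/X_1$ is solvable and not nilpotent, then $G/X_1$ is a Frobenius group whose Frobenius kernel is $(G/X_1)'$.
   Context: For $\chi\in\mathrm{Irr}(G)$, $Z(\chi)=\{g\in G: |\chi(g)|=\chi(1)\}$. $G$ is nested if for all $\chi,\psi\in\mathrm{Irr}(G)$ either $Z(\chi)\le Z(\psi)$ or $Z(\psi)\le Z(\chi)$; then the distinct subgroups $Z(\chi)$, $\chi\in\mathrm{Irr}(G)$, form a chain $G=X_0>X_1>\dots>X_n\ge1$, the chain of centers. *)

(* Defs.v *)
From HB Require Import structures.
From mathcomp Require Import all_boot all_order all_algebra all_fingroup all_solvable all_field all_character.
Set Implicit Arguments. Unset Strict Implicit. Unset Printing Implicit Defensive.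

Definition nested (gT : finGroupType) (G : {group gT}) : Prop :=
  forall i j : Iirr G,
    ('Z(('chi[G]_i)%R)%CF \subset 'Z(('chi[G]_j)%R)%CF) \/
    ('Z(('chi[G]_j)%R)%CF \subset 'Z(('chi[G]_i)%R)%CF).

(* X1 is the second term X_1 of the chain of centers of G: the largest
   center Z(chi) (chi in Irr(G)) that is a proper subgroup of G. *)
Definition second_center (gT : finGroupType) (G : {group gT}) (X1 : {set gT}) : Prop :=
  [/\ exists i : Iirr G, X1 = 'Z(('chi[G]_i)%R)%CF,
      X1 != G &
      forall j : Iirr G, 'Z(('chi[G]_j)%R)%CF != G -> 'Z(('chi[G]_j)%R)%CF \subset X1].

(* Main.v *)
Require Import Defs.
From HB Require Import structures.
From mathcomp Require Import all_boot all_order all_algebra all_fingroup all_solvable all_field all_character.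

Module CharPart.
Import GRing.Theory Num.Theory.
Local Open Scope ring_scope.
Local Open Scope group_scope.
Lemma center_G_lin (gT : finGroupType) (G : {group gT}) (i : Iirr G) :
  ('Z('chi_i)%CF = G)%g -> G^`(1)%g \subset cfker 'chi_i.
Proof.
move=> ZG; rewrite -lin_irr_der1 qualifE /= irr_char /=.
have := (irr1_bound i).1; rewrite ZG indexgg.
rewrite irr1_degree -natrX ler_nat (eqr_nat algC _ 1).
have := irr_degree_gt0 (socle_of_Iirr i).
by case: (irr_degree _) => [|[|n]] //.
Qed.

Lemma char_part (gT : finGroupType) (G X1 : {group gT}) :
  second_center G X1 -> forall M : {group coset_of X1},
  M <| G / X1 -> M :!=: 1 -> (G / X1)^`(1) \subset M.
Proof.
case=> [[i0 X1def] X1neG maxX1] M nsM ntM.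
have nsX1 : X1 <| G by rewrite X1def cfcenter_normal.
have nX1 := normal_norm nsX1.
set M0 := coset X1 @*^-1 M.
have nsM0 : M0 <| G by rewrite -(quotientGK nsX1) cosetpre_normal.
apply: contraR ntM => notsub.
have notG' : ~~ (G^`(1) \subset M0).
  apply: contra notsub => sG'M0.
  by rewrite -quotient_der // -[M : {set _}](cosetpreK M) quotientS.
have /existsP[i /andP[sM0K nlin]] : [exists i : Iirr G, (M0 \subset cfker 'chi_i) && ~~ (G^`(1) \subset cfker 'chi_i)].
  apply: contraR notG' => /existsPn H.
  have E : \bigcap_(i | M0 \subset cfker 'chi[G]_i) cfker 'chi_i = M0 :=
    cap_cfker_normal nsM0.
  rewrite -E; apply/bigcapsP=> i sM0i.
  by have := H i; rewrite sM0i /= negbK.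
have ZneG : 'Z('chi_i)%CF != G.
  by apply: contra nlin => /eqP/center_G_lin.
have sKX1 : cfker 'chi_i \subset X1.
  apply: subset_trans (maxX1 i ZneG).
  exact: normal_sub (cfker_center_normal _).
have : M0 \subset X1 := subset_trans sM0K sKX1.
move=> /(quotientS X1); rewrite cosetpreK trivg_quotient => /trivgP ->.
by rewrite ?negbK ?eqxx.
Qed.
End CharPart.

Module GroupPart.
Local Open Scope group_scope.
Lemma commuteJ' (rT : finGroupType) (x y k : rT) : commute x y -> commute (x ^ k) (y ^ k).
Proof. by rewrite /commute -!conjMg => ->. Qed.

Lemma frob_group (rT : finGroupType) (H : {group rT}) :
  solvable H -> ~~ nilpotent H ->
  (forall M : {group rT}, M <| H -> M :!=: 1 -> H^`(1) \subset M) ->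
  [Frobenius H with kernel H^`(1)].
Proof.
move=> solH nnilH minN.
set N := H^`(1).
have nsNH : N <| H := der_normal 1 H.
have [sNH nNH] := andP nsNH.
have ntN : N :!=: 1.
  apply: contra nnilH => /eqP N1; apply: abelian_nil; exact/derG1P.
have dich : forall M : {group rT}, M <| H -> M \subset N -> M :=: 1 \/ M :=: N.
  move=> M nsM sMN; case: (eqVneq (M : {set rT}) 1) => [->|ntM]; first by left.
  by right; apply/eqP; rewrite eqEsubset sMN minN.
have abN : abelian N.
  have nsN' : N^`(1) <| H := char_normal_trans (der_char 1 N) nsNH.
  case: (dich _ nsN' (der_sub 1 N)) => [N'1|N'N]; first exact/derG1P.
  have := sol_der1_proper (solvableS sNH solH) (subxx N) ntN.
  by rewrite N'N properE subxx.
have Z1 : 'Z(H) = 1.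
  apply/eqP; apply: contraR nnilH => ntZ.
  have sNZ := minN _ (center_normal H) ntZ.
  apply: small_nil_class; apply: (@leq_trans 2) => //; by rewrite nil_class2.
pose p := pdiv #|N|.
have p_pr : prime p by rewrite pdiv_prime // cardG_gt1.
have pN : p.-group N.
  have nsOp : 'O_p(N) <| H := char_normal_trans (pcore_char _ _) nsNH.
  case: (dich _ nsOp (pcore_sub _ _)) => [Op1|<-]; last exact: pcore_pgroup.
  have [x Nx ox] := Cauchy p_pr (pdiv_dvd #|N|).
  have : <[x]> \subset 'O_p(N).
    apply: pcore_max; last by rewrite -sub_abelian_normal ?cycle_subG.
    by rewrite /pgroup -orderE ox pnat_id.
  rewrite Op1 subG1 cycle_eq1 => /eqP x1.
  by move: ox; rewrite x1 order1 => p1; rewrite -p1 in p_pr.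
have CNnorm : forall g, g \in H -> 'C_N[g] <| H.
  move=> g Hg.
  have key : forall k y, k \in H -> y \in 'C_N[g] -> y ^ k \in 'C_N[g].
    move=> k y Hk /setIP[Ny /cent1P cyg].
    have Nyk : y ^ k \in N by rewrite memJ_norm ?(subsetP nNH).
    have Nc : [~ g, k] \in N by rewrite /N derg1 mem_commg.
    rewrite inE Nyk; apply/cent1P.
    have -> : g = g ^ k * [~ g, k]^-1 by rewrite conjg_mulR mulgK.
    apply: commuteM; first exact: commuteJ'.
    by apply: commuteV; apply: (centsP abN).
  rewrite /normal subIset ?sNH //=; apply/normsP => k Hk.
  apply/eqP; rewrite eqEcard cardJg leqnn andbT sub_conjg.
  by apply/subsetP => y Cy; rewrite mem_conjg invgK key.
pose C := 'C_H(N).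
have nsCH : C <| H.
  by rewrite /C norm_normalI // norms_cent.
have sCH : C \subset H := normal_sub nsCH.
have sNC : N \subset C by rewrite subsetI sNH.
have CN1 : forall g, g \in H -> g \notin C -> 'C_N[g] = 1.
  move=> g Hg nCg; case: (dich _ (CNnorm g Hg) (subsetIl _ _)) => // CN.
  by case/negP: nCg; rewrite inE Hg -sub_cent1 -CN subsetIr.
have CeqN : C = N.
  apply/eqP; rewrite eqEsubset sNC andbT.
  have nilC : nilpotent C.
    apply: small_nil_class; apply: (@leq_trans 2) => //; rewrite nil_class2.
    rewrite subsetI der_sub /=; apply: subset_trans (dergS 1 sCH) _.
    by rewrite centsC subsetIr.
  have Op'1 : 'O_p^'(C) = 1.
    have nsO : 'O_p^'(C) <| H := char_normal_trans (pcore_char _ _) nsCH.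
    case: (eqVneq ('O_p^'(C) : {set rT}) 1) => // ntO; exfalso.
    have p'N : p^'.-group N := pgroupS (minN _ nsO ntO) (pcore_pgroup _ _).
    have := pgroupP p'N p p_pr (pdiv_dvd _).
    by rewrite !inE eqxx.
  have pC : p.-group C.
    have := nilpotent_pcoreC p nilC; rewrite Op'1 dprodg1 => defC.
    by rewrite /C -defC pcore_pgroup.
  have : [exists q : 'I_#|H|.+1, prime q && (q %| #|H|) && (val q != p)].
    apply: contraR nnilH => /existsPn Hq; apply: (@pgroup_nil _ p).
    apply/pgroupP => r r_pr rdvd.
    have lt : r < #|H|.+1 by rewrite ltnS dvdn_leq.
    have := Hq (Ordinal lt); rewrite /= r_pr rdvd /= negbK => /eqP->.
    by rewrite !inE.
  case/existsP => q /andP[/andP[q_pr qdvd] qnp].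
  have [h Hh oh] := Cauchy q_pr qdvd.
  have nCh : h \notin C.
    apply/negP => /(mem_p_elt pC); rewrite /p_elt oh pnatE // !inE.
    by apply/negP.
  have nhkC : forall k, k \in H -> h ^ k \notin C.
    by move=> k Hk; rewrite memJ_norm ?(subsetP (normal_norm nsCH)).
  have cop : coprime #|N| #|<[h]>|.
    rewrite -orderE oh; apply: (pnat_coprime pN); rewrite pnatE // !inE.
  have nCh' : <[h]> \subset 'N(C) by rewrite cycle_subG (subsetP (normal_norm nsCH)).
  have nNh : <[h]> \subset 'N(N) by rewrite cycle_subG (subsetP nNH).
  have := coprime_norm_quotient_cent nCh' nNh cop (abelian_sol abN).
  have abHN : abelian (H / N) := sub_der1_abelian (subxx _).
  have hH : <[h]> \subset H by rewrite cycle_subG.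
  rewrite (setIidPl (centSS (quotientS _ sCH) (quotientS _ hH) abHN)) => eqQ.
  have : C / N \subset 'C_C(<[h]>) / N by rewrite eqQ.
  rewrite quotientSK ?(subset_trans sCH nNH) // => sC.
  apply/subsetP => c Cc.
  have /mulsgP[a z Na Cz ->] := subsetP sC c Cc.
  suff z1 : z = 1 by rewrite z1 mulg1.
  have : z \in 'Z(H); last by rewrite Z1 => /set1P.
  have [/setIP[Hz cNz] czh] := setIP Cz.
  rewrite inE Hz; apply/centP => k Hk.
  have Nw : [~ z, k] \in N by rewrite /N derg1 mem_commg.
  have czhk : commute z (h ^ k).
    rewrite conjg_mulR; apply: commuteM.
      by move: czh; rewrite cent_cycle => /cent1P.
    by apply: (centP cNz); rewrite /N derg1 mem_commg.
  have : [~ z, k] \in 'C_N[h ^ k].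
    rewrite inE Nw; apply/cent1P; rewrite commgEl.
    apply/commute_sym; apply: commuteM; last first.
      by apply/commute_sym/commuteJ'; move: czh; rewrite cent_cycle => /cent1P.
    by apply/commuteV/commute_sym.
  rewrite CN1; [ | by rewrite groupJ | exact: nhkC].
  by move=> /set1P /eqP /commgP.
apply/Frobenius_kerP; split=> //.
- by rewrite (sol_der1_proper solH) // (subG1_contra (der_sub 1 H) ntN).
- move=> x /setD1P[ntx Nx]; apply/subsetP=> g /setIP[Hg cxg].
  suff : g \in C by rewrite CeqN.
  apply: contraR ntx => nCg.
  have : x \in 'C_N[g].
    by rewrite inE Nx; apply/cent1P; apply/esym/cent1P.
  by rewrite CN1 // inE.
Qed.
End GroupPart.

Theorem mainTheorem13 (gT : finGroupType) (G X1 : {group gT}) :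
  nested G -> ~~ abelian G -> second_center G X1 ->
  solvable (G / X1) -> ~~ nilpotent (G / X1) ->
  [Frobenius (G / X1) with kernel (G / X1)^`(1)]%g.
Proof.
move=> _ _ sc solH nnilH.
have := @GroupPart.frob_group _ (G / X1)%G solH nnilH (@CharPart.char_part _ G X1 sc).
by [].
Qed.
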